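(* Let $\mathcal{H}$ be a hypergraph on a finite vertex set $V$ and let $p\in[0,1]$. For every $\gamma\in(0,1/10]$, writing $\mu=\mu_p(\mathcal{H})$ and $\Delta=\Delta_p(\mathcal{H})$, \[ \Pr\big(\nu(\mathcal{H}[V_p])\le\gamma^2\mu\big)\le\exp\big(-(1-\gamma)\mu+2\Delta\big). \]
   Context: $V_p$ denotes the random subset of $V$ containing each element independently with probability $p$. For $W\subseteq V$, $\mathcal{H}[W]=\{A\in\mathcal{H}: A\subseteq W\}$. $\nu(\cdot)$ is the matching number. $\mu_p(\mathcal{H})=\sum_{A\in\mathcal{H}}p^{|A|}$ and $\Delta_p(\mathcal{H})=\sum p^{|A\cup B|}$, the sum over unordered pairs $\{A,B\}$ of distinct edges of $\mathcal{H}$ with $A\cap B\neq\emptyset$. *)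

(* Defs.v *)
From HB Require Import structures.
From mathcomp Require Import all_boot all_order all_algebra.
From mathcomp Require Import reals sequences exp.
Set Implicit Arguments. Unset Strict Implicit. Unset Printing Implicit Defensive.
Import Order.TTheory GRing.Theory Num.Theory.
Local Open Scope ring_scope.

(* Vertex set V is the finite type T; a hypergraph is a set of subsets of T. *)

Definition induced (T : finType) (H : {set {set T}}) (W : {set T}) : {set {set T}} :=
  [set A in H | A \subset W].

Definition is_matching (T : finType) (M : {set {set T}}) : bool :=
  [forall A in M, forall B in M, (A != B) ==> [disjoint A & B]].

Definition matching_number (T : finType) (H : {set {set T}}) : nat :=
  \max_(M : {set {set T}} | (M \subset H) && is_matching M) #|M|.

Definition mu_p (R : realType) (T : finType) (p : R) (H : {set {set T}}) : R :=
  \sum_(A in H) p ^+ #|A|.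

Definition Delta_p (R : realType) (T : finType) (p : R) (H : {set {set T}}) : R :=
  \sum_(S : {set {set T}} | [&& S \subset H, #|S| == 2%N &
                             \bigcap_(A in S) A != set0])
     p ^+ #|\bigcup_(A in S) A|.

(* Pr(W = V_p) for the p-random subset V_p of T *)
Definition prob_Vp (R : realType) (T : finType) (p : R) (W : {set T}) : R :=
  p ^+ #|W| * (1 - p) ^+ (#|T| - #|W|).

Definition Pr_Vp (R : realType) (T : finType) (p : R) (E : pred {set T}) : R :=
  \sum_(W : {set T} | E W) prob_Vp p W.

(* Main.v *)
Require Import Defs.
From HB Require Import structures.
From mathcomp Require Import all_boot all_order all_algebra.
From mathcomp Require Import reals sequences exp.
From mathcomp Require Import ring lra.
Import Order.TTheory GRing.Theory Num.Theory.
Local Open Scope ring_scope.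
Set Implicit Arguments. Unset Strict Implicit. Unset Printing Implicit Defensive.
Section Prob.
Variables (R : realType) (T : finType) (p : R).
Hypotheses (hp0 : 0 <= p) (hp1 : p <= 1).

Fixpoint Ex (s : seq T) (f : {set T} -> R) (C : {set T}) : R :=
  if s is x :: s' then p * Ex s' f (x |: C) + (1 - p) * Ex s' f C else f C.

Lemma Ex_ext s f g C : (forall W, f W = g W) -> Ex s f C = Ex s g C.
Proof. move=> fg; elim: s C => [|x s IH] C /=; [exact: fg| by rewrite !IH]. Qed.

Lemma Ex_lin s a f g C : Ex s (fun W => a * f W + g W) C = a * Ex s f C + Ex s g C.
Proof. elim: s C => [|x s IH] C //=; rewrite !IH; ring. Qed.

Lemma Ex_cst s c C : Ex s (fun _ => c) C = c.
Proof. elim: s C => [|x s IH] C //=; rewrite !IH; ring. Qed.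

Lemma Ex_le s f g C : (forall W, f W <= g W) -> Ex s f C <= Ex s g C.
Proof.
move=> fg; elim: s C => [|x s IH] C /=; first exact: fg.
apply: lerD; apply: ler_wpM2l => //; rewrite ?subr_ge0 //.
Qed.

Lemma Ex_ge0 s f C : (forall W, 0 <= f W) -> 0 <= Ex s f C.
Proof. by move=> h; rewrite -(Ex_cst s 0 C); apply: Ex_le. Qed.

Lemma Ex_sum s (I : Type) (r : seq I) (P : pred I) F C :
  Ex s (fun W => \sum_(i <- r | P i) F i W) C = \sum_(i <- r | P i) Ex s (F i) C.
Proof.
elim: s C => [|x s IH] C //=; by rewrite !IH !mulr_sumr -big_split.
Qed.

Lemma Ex_opp s f C : Ex s (fun W => - f W) C = - Ex s f C.
Proof.
rewrite (Ex_ext _ (g := fun W => (-1) * f W + 0)); last by move=> W; ring.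
rewrite Ex_lin Ex_cst; ring.
Qed.

Definition omono (O : {set T}) (f : {set T} -> R) :=
  forall W x, if x \in O then f (x |: W) <= f W else f W <= f (x |: W).

Lemma Ex_omono s O f : omono O f -> omono O (Ex s f).
Proof.
move=> hf; elim: s => [|y s IH] //= W x.
have h1 := IH (y |: W) x; have h2 := IH W x.
rewrite setUCA; case: ifP h1 h2 => _ h1 h2.
  by apply: lerD; apply: ler_wpM2l => //; rewrite ?subr_ge0.
by apply: lerD; apply: ler_wpM2l => //; rewrite ?subr_ge0.
Qed.

Lemma harris s O f g C : omono O f -> omono O g ->
  Ex s f C * Ex s g C <= Ex s (fun W => f W * g W) C.
Proof.
move=> hf hg; elim: s C => [|x s IH] C /=; first by [].
have mf := Ex_omono s hf C x; have mg := Ex_omono s hg C x.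
have h1 := IH (x |: C); have h2 := IH C.
set F1 := Ex s f (x |: C) in mf h1 *; set F0 := Ex s f C in mf h2 *.
set G1 := Ex s g (x |: C) in mg h1 *; set G0 := Ex s g C in mg h2 *.
have key : 0 <= (F1 - F0) * (G1 - G0).
  case: ifP mf mg => _ mf mg.
    by apply: mulr_le0; rewrite subr_le0.
  by apply: mulr_ge0; rewrite subr_ge0.
have k2 : 0 <= p * (1 - p) * ((F1 - F0) * (G1 - G0)).
  by rewrite mulr_ge0 // mulr_ge0 // subr_ge0.
have k3 : p * (F1 * G1) + (1 - p) * (F0 * G0) <= p * Ex s (fun W => f W * g W) (x |: C) + (1 - p) * Ex s (fun W => f W * g W) C.
  by apply: lerD; apply: ler_wpM2l => //; rewrite ?subr_ge0.
have e : (p * F1 + (1 - p) * F0) * (p * G1 + (1 - p) * G0) =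
  p * (F1 * G1) + (1 - p) * (F0 * G0) - p * (1 - p) * ((F1 - F0) * (G1 - G0)) by ring.
rewrite e; lra.
Qed.

Lemma harris_anti s O f g C : omono O f -> omono O (fun W => - g W) ->
  Ex s (fun W => f W * g W) C <= Ex s f C * Ex s g C.
Proof.
move=> hf hg; have := harris s C hf hg.
rewrite Ex_opp (Ex_ext _ (f := fun W => f W * - g W) (g := fun W => - (f W * g W))); last by move=> W; ring.
rewrite Ex_opp; lra.
Qed.

End Prob.
Lemma sum_subsetU1 (R : realType) (X : finType) (x : X) (S : {set X}) (F : {set X} -> R) :
  x \notin S ->
  \sum_(W : {set X} | W \subset x |: S) F W = \sum_(W : {set X} | W \subset S) F W + \sum_(W : {set X} | W \subset S) F (x |: W).
Proof.
move=> xS; rewrite (bigID (fun W : {set X} => x \in W)) /= addrC; congr (_ + _).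
  apply: eq_bigl => W; apply/andP/idP.
    case=> /subsetP h xW; apply/subsetP => y yW.
    have := h y yW; rewrite !inE; case/orP => // /eqP yx.
    by rewrite -yx yW in xW.
  move=> WS; split; first exact: subset_trans WS (subsetU1 _ _).
  by apply/negP => xW; move/subsetP: WS => /(_ x xW); rewrite (negbTE xS).
rewrite (reindex_onto (fun W : {set X} => x |: W) (fun W : {set X} => W :\ x)) /=; last first.
  by move=> W /andP[_ xW]; rewrite setD1K.
apply: eq_bigl => W; rewrite setU11 andbT.
case: (boolP (W \subset S)) => WS.
  have xW : x \notin W by apply/negP => xW; move/subsetP: WS => /(_ x xW); rewrite (negbTE xS).
  by rewrite setU1K // eqxx andbT setUS.
apply/negbTE/negP => /andP[h /eqP e].
have xW : x \notin W by rewrite -e !inE eqxx.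
apply/negP: WS; apply/negPn/subsetP => y yW.
have : y \in x |: S by move/subsetP: h; apply; rewrite !inE yW orbT.
rewrite !inE; case/orP => // /eqP yx; by rewrite -yx yW in xW.
Qed.

Section Prob2.
Variables (R : realType) (T : finType) (p : R).
Hypotheses (hp0 : 0 <= p) (hp1 : p <= 1).

Lemma Ex_sumE s f C : uniq s -> Ex p s f C =
  \sum_(W : {set T} | W \subset [set:: s]) p ^+ #|W| * (1 - p) ^+ (size s - #|W|) * f (W :|: C).
Proof.
elim: s C => [|x s IH] C /=.
  move=> _; rewrite set_nil (big_pred1 set0); last by move=> W; rewrite subset0.
  by rewrite cards0 expr0 mul1r mul1r set0U.
case/andP=> xs us; rewrite set_cons sum_subsetU1; last by rewrite inE.
rewrite !IH // addrC mulr_sumr mulr_sumr; congr (_ + _); apply: eq_bigr => W WS.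
  have hW : (#|W| <= size s)%N.
    apply: leq_trans (subset_leq_card WS) _; rewrite cardsE; exact: card_size.
  rewrite subSn // exprS; ring.
have xW : x \notin W.
  by apply/negP => xW; move/subsetP: WS => /(_ x xW); rewrite inE (negbTE xs).
rewrite cardsU1 xW add1n subSS exprS -setUA (setUCA [set x]); ring.
Qed.

Lemma set_enumT : [set:: enum T] = setT.
Proof. by apply/setP => y; rewrite !inE mem_enum. Qed.

Lemma Pr_Ex (E : pred {set T}) :
  Pr_Vp p E = Ex p (enum T) (fun W => (E W)%:R) set0.
Proof.
rewrite Ex_sumE ?enum_uniq //.
rewrite set_enumT.
rewrite /Pr_Vp big_mkcond /=; apply: eq_big => W; first by rewrite subsetT.
move=> _; rewrite setU0 /prob_Vp -cardE.
by case: (E W); rewrite ?mulr1 ?mulr0.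
Qed.

Definition ind (S W : {set T}) : R := (S \subset W)%:R.

Lemma ind_ge0 S W : 0 <= ind S W. Proof. by rewrite /ind; case: (S \subset W). Qed.
Lemma ind_le1 S W : ind S W <= 1. Proof. by rewrite /ind; case: (S \subset W). Qed.

Lemma Ex_ind s S C : uniq s -> Ex p s (ind S) C =
  if S \subset C :|: [set:: s] then p ^+ #|S :\: C| else 0.
Proof.
elim: s C => [|x s IH] C /=.
  move=> _; rewrite set_nil setU0 /ind.
  case: (boolP (S \subset C)) => // SC.
  by move: SC; rewrite -setD_eq0 => /eqP ->; rewrite cards0.
case/andP=> xs us; rewrite !IH // set_cons.
case: (boolP ((x \in S) && (x \notin C))) => [/andP[xS xC]|hx].
  have -> : (S \subset C :|: [set:: s]) = false.
    apply/negP => /subsetP /(_ x xS); rewrite !inE (negbTE xC) /=.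
    by rewrite (negbTE xs).
  rewrite -setUA (setUCA [set x]); case: ifP => _; last by ring.
  have -> : S :\: (x |: C) = (S :\: C) :\ x by rewrite setDDl setUC.
  rewrite (cardsD1 x (S :\: C)) !inE xS xC /=.
  by rewrite exprS; ring.
have e1 : (S \subset (x |: C) :|: [set:: s]) = (S \subset C :|: [set:: s]).
  apply/idP/idP => /subsetP h; apply/subsetP => y yS; have := h y yS; rewrite !inE.
    case: (eqVneq y x) => [yx|_] /=; last by [].
    by move=> _; move: hx; rewrite -yx yS /= negbK => ->.
  by case/orP => ->; rewrite ?orbT.
have e2 : (S \subset C :|: (x |: [set:: s])) = (S \subset C :|: [set:: s]).
  by rewrite setUCA -e1 setUA.
have e3 : S :\: (x |: C) = S :\: C.
  apply/setP => y; rewrite !inE; case: (eqVneq y x) => [->|] //=.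
  move: hx; rewrite negb_and negbK; case/orP => [xS|xC].
    by rewrite (negbTE xS) andbF.
  by rewrite xC.
rewrite e1 e2 e3; case: ifP => _; ring.
Qed.

Lemma E_ind S : Ex p (enum T) (ind S) set0 = p ^+ #|S|.
Proof. by rewrite Ex_ind ?enum_uniq // set_enumT set0U subsetT setD0. Qed.

End Prob2.
Section Janson.
Variables (R : realType) (T : finType) (p : R).
Hypotheses (hp0 : 0 <= p) (hp1 : p <= 1).

Local Notation E f := (Ex p (enum T) f set0).
Local Notation ind := (@ind R T).

Lemma Ex_sub (s : seq T) (f g : {set T} -> R) (C : {set T}) : Ex p s (fun W => f W - g W) C = Ex p s f C - Ex p s g C.
Proof.
rewrite (Ex_ext _ _ (f := fun W => f W - g W) (g := fun W => 1 * f W + - g W)); last by move=> W; ring.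
by rewrite Ex_lin Ex_opp mul1r.
Qed.

Lemma ind_mul (b c W : {set T}) : ind b W * ind c W = ind (b :|: c) W.
Proof. by rewrite /ind subUset; case: (b \subset W); case: (c \subset W); rewrite ?mulr1 ?mulr0. Qed.

Lemma ind_U1 (S : {set T}) (x : T) (W : {set T}) : ind S W <= ind S (x |: W).
Proof.
rewrite /ind; case: (boolP (S \subset W)) => h; last by case: (_ \subset _).
by rewrite (subset_trans h (subsetU1 _ _)).
Qed.

Lemma ind_U1_eq (S : {set T}) (x : T) (W : {set T}) : x \notin S -> ind S (x |: W) = ind S W.
Proof.
move=> xS; rewrite /ind.
suff -> : (S \subset x |: W) = (S \subset W) by [].
apply/idP/idP => /subsetP h; apply/subsetP => y yS.
  have := h y yS; rewrite !inE; case/orP => // /eqP yx; by rewrite -yx yS in xS.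
by rewrite !inE h ?orbT.
Qed.

Definition Nn (l : seq {set T}) W : R := \prod_(c <- l) (1 - ind c W).

Fixpoint Jsum (l : seq {set T}) : R :=
  if l is b :: l' then Jsum l' + \sum_(c <- l' | c :&: b != set0) p ^+ #|b :|: c| else 0.

Lemma prod_01 (r : seq {set T}) (P : pred {set T}) (W : {set T}) :
  0 <= \prod_(c <- r | P c) (1 - ind c W) <= 1.
Proof.
apply: (big_ind (fun x => 0 <= x <= 1)); first by rewrite ler01 lexx.
  by move=> a b /andP[a0 a1] /andP[b0 b1]; apply/andP; split; [apply: mulr_ge0|apply: mulr_ile1].
by move=> c _; have := ind_ge0 R c W; have := ind_le1 R c W; move=> h1 h2; apply/andP; split; lra.
Qed.

Lemma prod_decr (r : seq {set T}) (P : pred {set T}) (W : {set T}) (x : T) :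
  \prod_(c <- r | P c) (1 - ind c (x |: W)) <= \prod_(c <- r | P c) (1 - ind c W).
Proof.
have : 0 <= \prod_(c <- r | P c) (1 - ind c (x |: W)) /\
  \prod_(c <- r | P c) (1 - ind c (x |: W)) <= \prod_(c <- r | P c) (1 - ind c W) /\
  \prod_(c <- r | P c) (1 - ind c W) <= 1; last by case=> _ [].
apply: (big_ind2 (fun a b => 0 <= a /\ a <= b /\ b <= 1)) => //.
  move=> a1 a2 b1 b2 [h1 [h2 h3]] [k1 [k2 k3]]; split; first exact: mulr_ge0.
  split; last exact: mulr_ile1 (le_trans h1 h2) (le_trans k1 k2) h3 k3.
  by apply: ler_pM.
move=> c _; have := ind_ge0 R c W; have := ind_le1 R c (x |: W); have := ind_U1 c x W.
move=> h1 h2 h3; split; [lra|split; lra].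
Qed.

Lemma prod_ge (r : seq {set T}) (P : pred {set T}) (W : {set T}) :
  1 - \sum_(c <- r | P c) ind c W <= \prod_(c <- r | P c) (1 - ind c W).
Proof.
elim: r => [|c r IH]; first by rewrite !big_nil subr0.
rewrite !big_cons; case: (P c) => //.
have := ind_ge0 R c W; have := ind_le1 R c W.
have s0 : 0 <= \sum_(c <- r | P c) ind c W by apply: sumr_ge0 => i _; apply: ind_ge0.
move=> h1 h2.
have : (1 - ind c W) * (1 - \sum_(c <- r | P c) ind c W) <=
       (1 - ind c W) * \prod_(j <- r | P j) (1 - ind j W).
  by apply: ler_wpM2l => //; lra.
nra.
Qed.

Lemma omono_ind (O S : {set T}) : [disjoint O & S] -> omono O (ind S).
Proof.
move=> dOS W x; case: ifP => xO; last exact: ind_U1.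
rewrite ind_U1_eq //; apply/negP => xS.
by move: dOS; rewrite disjoint_sym => /disjointFr /(_ xS); rewrite xO.
Qed.

Lemma omono_negprod (r : seq {set T}) (P : pred {set T}) :
  omono set0 (fun W => - \prod_(c <- r | P c) (1 - ind c W)).
Proof. by move=> W x; rewrite inE lerN2; apply: prod_decr. Qed.

Lemma omono_Ef (r : seq {set T}) (b : {set T}) :
  omono (~: b) (fun W => \prod_(c <- r | ~~ (c :&: b != set0)) (1 - ind c W)).
Proof.
move=> W x; rewrite inE; case: (boolP (x \in b)) => /= xb; last exact: prod_decr.
rewrite le_eqVlt; apply/orP; left; apply/eqP; apply: eq_bigr => c; rewrite negbK => /eqP cb.
rewrite ind_U1_eq //; apply/negP => xc.
have : x \in c :&: b by rewrite inE xc xb.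
by rewrite cb inE.
Qed.

Lemma E_Nn_ge0 l : 0 <= E (Nn l).
Proof. apply: Ex_ge0 => // W; rewrite /Nn; case/andP: (prod_01 l predT W) => //. Qed.

Lemma janson_step (b : {set T}) (l : seq {set T}) :
  E (Nn (b :: l)) <=
  E (Nn l) * expR (- p ^+ #|b| + \sum_(c <- l | c :&: b != set0) p ^+ #|b :|: c|).
Proof.
set S := \sum_(c <- l | c :&: b != set0) p ^+ #|b :|: c|.
set D := fun W => \prod_(c <- l | c :&: b != set0) (1 - ind c W).
set Ef := fun W => \prod_(c <- l | ~~ (c :&: b != set0)) (1 - ind c W).
have hsplit : forall W, Nn l W = D W * Ef W.
  by move=> W; rewrite /Nn (bigID (fun c => c :&: b != set0)).
have S0 : 0 <= S by apply: sumr_ge0 => c _; apply: exprn_ge0.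
have e1 : E (Nn (b :: l)) = E (Nn l) - E (fun W => ind b W * Nn l W).
  rewrite -Ex_sub; apply: Ex_ext => W; rewrite /Nn big_cons; ring.
have Ef01 : forall W, 0 <= Ef W <= 1 by move=> W; exact: prod_01.
have D01 : forall W, 0 <= D W <= 1 by move=> W; exact: prod_01.
have pw : forall W, ind b W * Ef W - \sum_(c <- l | c :&: b != set0) (ind (b :|: c) W * Ef W)
    <= ind b W * Nn l W.
  move=> W; rewrite hsplit.
  have hD := prod_ge l (fun c => c :&: b != set0) W.
  have e : ind b W * Ef W - \sum_(c <- l | c :&: b != set0) (ind (b :|: c) W * Ef W)
      = ind b W * Ef W * (1 - \sum_(c <- l | c :&: b != set0) ind c W).
    rewrite mulrBr mulr1 mulr_sumr; congr (_ - _); apply: eq_bigr => c _.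
    by rewrite -ind_mul; ring.
  rewrite e; have -> : ind b W * (D W * Ef W) = ind b W * Ef W * D W by ring.
  apply: ler_wpM2l => //; apply: mulr_ge0; first exact: ind_ge0.
  by case/andP: (Ef01 W).
have h3 := Ex_le hp0 hp1 (enum T) set0 pw.
rewrite Ex_sub Ex_sum in h3.
have h4 : E (ind b) * E Ef <= E (fun W => ind b W * Ef W).
  apply: (@harris _ _ p hp0 hp1 (enum T) (~: b)); first by apply: omono_ind; rewrite disjoints_subset.
  exact: omono_Ef.
have h5 : forall c, E (fun W => ind (b :|: c) W * Ef W) <= p ^+ #|b :|: c| * E Ef.
  move=> c; rewrite -E_ind //; apply: (@harris_anti _ _ p hp0 hp1 (enum T) set0).
    by apply: omono_ind; rewrite -setI_eq0 set0I.
  exact: omono_negprod.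
have h6 : \sum_(c <- l | c :&: b != set0) E (fun W => ind (b :|: c) W * Ef W) <= S * E Ef.
  rewrite /S mulr_suml; apply: ler_sum => c _; exact: h5.
rewrite E_ind // in h4.
have h7 : E (Nn l) <= E Ef.
  apply: Ex_le => // W; rewrite hsplit; case/andP: (D01 W) => d0 d1; case/andP: (Ef01 W) => f0 f1.
  by rewrite ler_piMl.
have h8 : 0 <= E (fun W => ind b W * Nn l W).
  apply: Ex_ge0 => // W; apply: mulr_ge0; first exact: ind_ge0.
  rewrite hsplit; case/andP: (D01 W) => d0 d1; case/andP: (Ef01 W) => f0 f1; exact: mulr_ge0.
have A0 := E_Nn_ge0 l.
have key : (p ^+ #|b| - S) * E (Nn l) <= E (fun W => ind b W * Nn l W).
  case: (lerP 0 (p ^+ #|b| - S)) => hq.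
    apply: le_trans (_ : (p ^+ #|b| - S) * E Ef <= _).
      exact: ler_wpM2l.
    lra.
  apply: le_trans h8; apply: mulr_le0_ge0 => //; exact: ltW.
rewrite e1.
have := expR_ge1Dx (- p ^+ #|b| + S).
move=> hx.
have : E (Nn l) * (1 + (- p ^+ #|b| + S)) <= E (Nn l) * expR (- p ^+ #|b| + S).
  exact: ler_wpM2l.
nra.
Qed.

Lemma janson (l : seq {set T}) :
  E (Nn l) <= expR (- \sum_(c <- l) p ^+ #|c| + Jsum l).
Proof.
elim: l => [|b l IH].
  rewrite big_nil oppr0 add0r /= expR0 (Ex_ext _ _ (g := fun _ => 1)) ?Ex_cst //.
  by move=> W; rewrite /Nn big_nil.
apply: le_trans (janson_step b l) _.
rewrite big_cons /=.
have -> : - (p ^+ #|b| + \sum_(c <- l) p ^+ #|c|) +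
    (Jsum l + \sum_(c <- l | c :&: b != set0) p ^+ #|b :|: c|) =
    (- \sum_(c <- l) p ^+ #|c| + Jsum l) + (- p ^+ #|b| + \sum_(c <- l | c :&: b != set0) p ^+ #|b :|: c|).
  by ring.
rewrite [X in _ <= X]expRD; apply: ler_pM => //; [exact: E_Nn_ge0 | exact: expR_ge0].
Qed.

End Janson.
Section Comb.
Variables (R : realType) (T : finType) (p : R).
Hypotheses (hp0 : 0 <= p) (hp1 : p <= 1).

Definition Ord (H : {set {set T}}) : R :=
  \sum_(a : {set T}) \sum_(c : {set T})
    (if [&& a \in H, c \in H, c != a & c :&: a != set0] then p ^+ #|a :|: c| else 0).

Lemma Ord_ge0 H : 0 <= Ord H.
Proof. by apply: sumr_ge0 => a _; apply: sumr_ge0 => c _; case: ifP => _; rewrite ?exprn_ge0. Qed.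

Lemma pair_bigcup (a c : {set T}) : \bigcup_(A in [set a; c]) A = a :|: c.
Proof. by rewrite bigcup_setU !big_set1. Qed.

Lemma pair_bigcap (a c : {set T}) : \bigcap_(A in [set a; c]) A = a :&: c.
Proof. by rewrite bigcap_setU !big_set1. Qed.

Lemma Ord_Delta H : Ord H = 2 * Delta_p p H.
Proof.
pose PD (S : {set {set T}}) := [&& S \subset H, #|S| == 2 & \bigcap_(A in S) A != set0].
pose g (S : {set {set T}}) := p ^+ #|\bigcup_(A in S) A|.
have key_pair : forall (a c : {set T}) (S : {set {set T}}), c != a ->
    (PD S && (a \in S) && (c \in S)) = [&& S == [set a; c], a \in H, c \in H & c :&: a != set0].
  move=> a c S ca; apply/idP/idP.
    case/andP => /andP[/and3P[SH S2 Sc] aS] cS.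
    have eS : S = [set a; c].
      apply/eqP; rewrite eq_sym eqEcard; apply/andP; split.
        by apply/subsetP => y; rewrite !inE => /orP[/eqP->|/eqP->].
      by rewrite (eqP S2) cards2 eq_sym ca.
    move: SH Sc; rewrite eS pair_bigcap setIC => /subsetP SH Sc.
    by rewrite eqxx SH ?SH ?Sc // !inE eqxx ?orbT.
  case/and4P => /eqP -> aH cH m.
  have ac : a != c by rewrite eq_sym.
  rewrite /PD pair_bigcap setIC m cards2 ac !inE !eqxx ?orbT /= !andbT.
  by apply/subsetP => y; rewrite !inE => /orP[/eqP->|/eqP->].
have claim1 : forall a c : {set T},
    (if [&& a \in H, c \in H, c != a & c :&: a != set0] then p ^+ #|a :|: c| else 0) =
    \sum_(S : {set {set T}}) (if [&& PD S, a \in S, c \in S & c != a] then g S else 0).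
  move=> a c; case: (eqVneq c a) => [->|ca].
    rewrite ?eqxx /= !andbF /= big1 // => S _.
    by rewrite ?eqxx /= !andbF.
  have e : forall S, [&& PD S, a \in S & c \in S] =
      [&& S == [set a; c], a \in H, c \in H & c :&: a != set0].
    by move=> S; rewrite -key_pair // andbA.
  under eq_bigr => S _ do rewrite /= andbT e.
  rewrite /=; case: (boolP [&& a \in H, c \in H & c :&: a != set0]) => h.
    under eq_bigr => S _ do rewrite andbT.
    by rewrite -big_mkcond /= big_pred1_eq /g pair_bigcup.
  by rewrite big1 // => S _; rewrite andbF.
have claim2 : forall S : {set {set T}},
    \sum_(a : {set T}) \sum_(c : {set T}) (if [&& PD S, a \in S, c \in S & c != a] then g S else 0)
    = (if PD S then 2 * g S else 0).
  move=> S; case: (boolP (PD S)) => hS /=; last by rewrite big1 // => a _; rewrite big1.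
  rewrite (eq_bigr (fun a => if a \in S then g S else 0)); last first.
    move=> a _; case: (boolP (a \in S)) => aS /=; last by rewrite big1.
    rewrite -big_mkcond /= (eq_bigl (fun c => c \in S :\ a)); last first.
      by move=> c; rewrite !inE andbC.
    rewrite sumr_const.
    have h2 : #|S| = 2 by case/and3P: hS => _ /eqP.
    have h1 : #|S :\ a| = 1%N.
      by move: h2; rewrite (cardsD1 a S) aS add1n => -[].
    by rewrite h1.
  by rewrite -big_mkcond /= sumr_const; case/and3P: hS => _ /eqP -> _; rewrite mulr_natl.
rewrite /Ord (eq_bigr (fun a => \sum_c \sum_S
    (if [&& PD S, a \in S, c \in S & c != a] then g S else 0))); last first.
  by move=> a _; apply: eq_bigr => c _; exact: claim1.
under eq_bigr => a _ do rewrite exchange_big.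
rewrite exchange_big /=.
under eq_bigr => S _ do rewrite claim2.
rewrite (eq_bigr (fun S => 2 * (if PD S then g S else 0))); last first.
  by move=> S _; case: ifP; rewrite ?mulr0.
by rewrite -mulr_sumr -big_mkcond.
Qed.

End Comb.
Section Comb2.
Variables (R : realType) (T : finType) (p : R).
Hypotheses (hp0 : 0 <= p) (hp1 : p <= 1).

Lemma Jsum_ord (l : seq {set T}) : uniq l -> Jsum p l * 2 =
  \sum_(a <- l) \sum_(c <- l | (c != a) && (c :&: a != set0)) p ^+ #|a :|: c|.
Proof.
elim: l => [|b l IH] /=; first by rewrite big_nil mul0r.
case/andP => bl ul.
set S := \sum_(c <- l | c :&: b != set0) p ^+ #|b :|: c|.
have e1 : \sum_(c <- l | (c != b) && (c :&: b != set0)) p ^+ #|b :|: c| = S.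
  rewrite big_seq_cond [RHS]big_seq_cond; apply: eq_bigl => c.
  case: (boolP (c \in l)) => //= cl.
  have -> // : c != b by apply/eqP => e; rewrite -e cl in bl.
have e2 : \sum_(a <- l) (if (b != a) && (b :&: a != set0) then p ^+ #|a :|: b| else 0) = S.
  rewrite /S [RHS]big_mkcond big_seq [RHS]big_seq; apply: eq_bigr => a al.
  have -> : b != a by apply/eqP => e; rewrite e al in bl.
  by rewrite setIC setUC.
rewrite big_cons /= big_cons eqxx /= e1.
under eq_bigr => a _ do rewrite big_cons.
rewrite (eq_bigr (fun a => (if (b != a) && (b :&: a != set0) then p ^+ #|a :|: b| else 0) +
   \sum_(c <- l | (c != a) && (c :&: a != set0)) p ^+ #|a :|: c|)); last first.
  by move=> a _; case: ifP; rewrite ?add0r.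
rewrite big_split /= e2 -IH //; ring.
Qed.

Lemma Jsum_le (G H : {set {set T}}) : G \subset H -> Jsum p (enum G) <= Delta_p p H.
Proof.
move=> GH.
have h : Jsum p (enum G) * 2 <= Ord p H.
  rewrite Jsum_ord ?enum_uniq // big_enum /= /Ord [X in X <= _]big_mkcond /=.
  apply: ler_sum => a _; case: (boolP (a \in G)) => aG; last first.
    by apply: sumr_ge0 => c _; case: ifP => _; rewrite ?exprn_ge0.
  rewrite big_enum_cond /= big_mkcond /=; apply: ler_sum => c _.
  case: (boolP ((c \in G) && ((c != a) && (c :&: a != set0)))) => hc.
    case/andP: hc => cG /andP[ca m].
    by rewrite (subsetP GH a aG) (subsetP GH c cG) ca m.
  by case: ifP => _; rewrite ?exprn_ge0.
rewrite Ord_Delta in h; lra.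
Qed.

End Comb2.
Lemma sum_subset_prod (R : realType) (X : finType) (D : {set X}) (y : X -> R) :
  (forall A, 0 <= y A) ->
  \sum_(M : {set X} | M \subset D) \prod_(A in M) y A <= expR (\sum_(A in D) y A).
Proof.
move=> y0.
suff h : forall l : seq X, uniq l ->
    \sum_(M : {set X} | M \subset [set:: l]) \prod_(A in M) y A <= expR (\sum_(A <- l) y A).
  by have := h (enum D) (enum_uniq _); rewrite set_enum big_enum.
elim=> [|x l IH] /=.
  move=> _; rewrite set_nil big_nil expR0 (big_pred1 set0); last by move=> M; rewrite subset0.
  by rewrite big_set0.
case/andP => xl ul; rewrite set_cons sum_subsetU1; last by rewrite inE.
have e : \sum_(M : {set X} | M \subset [set:: l]) \prod_(A in x |: M) y A =
    y x * \sum_(M : {set X} | M \subset [set:: l]) \prod_(A in M) y A.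
  rewrite mulr_sumr; apply: eq_bigr => M Ml; rewrite big_setU1 //.
  by apply/negP => xM; move/subsetP: Ml => /(_ x xM); rewrite inE (negbTE xl).
rewrite e big_cons expRD.
have s0 : 0 <= \sum_(M : {set X} | M \subset [set:: l]) \prod_(A in M) y A.
  by apply: sumr_ge0 => M _; apply: prodr_ge0 => A _.
have := IH ul; have := expR_ge1Dx (y x); have := y0 x.
set a := \sum_(_ | _) _; set b := expR (\sum_(_ <- _) _).
move=> h1 h2 h3.
have : (1 + y x) * a <= expR (y x) * b.
  apply: ler_pM => //; lra.
lra.
Qed.

Section Main.
Variables (R : realType) (T : finType) (H : {set {set T}}) (p : R).
Hypotheses (hp0 : 0 <= p) (hp1 : p <= 1) (Hne : set0 \notin H).

Definition wp (A : {set T}) : R :=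
  \sum_(B in H | (B != A) && (B :&: A != set0)) p ^+ #|B|.
Definition Hg : {set {set T}} := [set A in H | wp A <= 2].

Lemma Hg_sub : Hg \subset H.
Proof. by apply/subsetP => A; rewrite inE => /andP[]. Qed.

Lemma expUle (A B : {set T}) : p ^+ #|A| * p ^+ #|B| <= p ^+ #|A :|: B|.
Proof.
rewrite -exprD; apply: ler_wiXn2l => //.
by rewrite cardsU leq_subr.
Qed.

Lemma bad_mass : mu_p p H <= mu_p p Hg + Delta_p p H.
Proof.
rewrite /mu_p (bigID (fun A => wp A <= 2)) /=.
have -> : \sum_(A in H | wp A <= 2) p ^+ #|A| = \sum_(A in Hg) p ^+ #|A|.
  by apply: eq_bigl => A; rewrite inE.
rewrite lerD2l.
have h1 : \sum_(A in H | ~~ (wp A <= 2)) p ^+ #|A| <= \sum_(A in H) (p ^+ #|A| * wp A) / 2.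
  rewrite [X in _ <= X](bigID (fun A => wp A <= 2)) /=.
  rewrite -[X in X <= _]add0r; apply: lerD.
    apply: sumr_ge0 => A _; rewrite divr_ge0 // mulr_ge0 ?exprn_ge0 //.
    by apply: sumr_ge0 => B _; exact: exprn_ge0.
  apply: ler_sum => A /andP[_ hA].
  rewrite -ltNge in hA.
  have e0 := exprn_ge0 #|A| hp0.
  rewrite -mulrA; apply: ler_peMr => //.
  rewrite ler_pdivlMr //; lra.
have h2 : \sum_(A in H) (p ^+ #|A| * wp A) <= Ord p H.
  rewrite /Ord [X in X <= _]big_mkcond /=; apply: ler_sum => A _.
  case: (boolP (A \in H)) => AH; last first.
    by rewrite /wp; rewrite big1 // => c _; rewrite /= andFb.
  rewrite /wp mulr_sumr [X in X <= _]big_mkcond /=; apply: ler_sum => B _.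
  case: ifP => _; last by [].
  exact: expUle.
rewrite Ord_Delta in h2.
apply: le_trans h1 _; rewrite -mulr_suml; lra.
Qed.

End Main.
Lemma sum_sub_le (R : realType) (X : finType) (A B : {set X}) (g : X -> R) :
  A \subset B -> (forall x, 0 <= g x) -> \sum_(x in A) g x <= \sum_(x in B) g x.
Proof.
move=> AB g0; rewrite [X in _ <= X](bigID (fun x => x \in A)) /=.
have -> : \sum_(i in B | i \in A) g i = \sum_(i in A) g i.
  by apply: eq_bigl => x; case: (boolP (x \in A)) => xA; rewrite ?andbT ?andbF // (subsetP AB).
by rewrite lerDl; apply: sumr_ge0.
Qed.

Section Main2.
Variables (R : realType) (T : finType) (H : {set {set T}}) (p : R).
Hypotheses (hp0 : 0 <= p) (hp1 : p <= 1) (Hne : set0 \notin H).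

Local Notation Hg := (Hg H p).
Local Notation wp := (wp H p).

Definition U (M : {set {set T}}) : {set T} := \bigcup_(A in M) A.
Definition GM (M : {set {set T}}) : {set {set T}} := [set B in Hg | B :&: U M == set0].
Definition Ms (s : R) : {set {set {set T}}} :=
  [set M : {set {set T}} | [&& M \subset Hg, is_matching M & (#|M|%:R <= s)]].

Lemma GM_sub (M : {set {set T}}) : GM M \subset H.
Proof.
apply/subsetP => B; rewrite inE => /andP[BHg _]; exact: (subsetP (Hg_sub H p)).
Qed.

Lemma mu_GM (M : {set {set T}}) : M \subset Hg -> mu_p p Hg <= mu_p p (GM M) + 3 * (#|M|)%:R.
Proof.
move=> MHg; rewrite /mu_p (bigID (fun B => B :&: U M == set0)) /=.
have -> : \sum_(B in Hg | B :&: U M == set0) p ^+ #|B| = \sum_(B in GM M) p ^+ #|B|.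
  by apply: eq_bigl => B; rewrite [in RHS]inE.
rewrite lerD2l.
pose f (B A : {set T}) := if B :&: A != set0 then p ^+ #|B| else 0.
have f0 : forall B A, 0 <= f B A by move=> B A; rewrite /f; case: ifP => _; rewrite ?exprn_ge0.
apply: le_trans (_ : _ <= \sum_(B in Hg) \sum_(A in M) f B A) _.
  rewrite big_mkcondr /=; apply: ler_sum => B _; case: ifP => h; last first.
    by apply: sumr_ge0 => A _.
  case/set0Pn: h => x; rewrite inE => /andP[xB /bigcupP[A AM xA]].
  rewrite (bigD1 A) //= {1}/f.
  have -> : B :&: A != set0 by apply/set0Pn; exists x; rewrite inE xB xA.
  by rewrite lerDl; apply: sumr_ge0 => D _.
rewrite exchange_big /=.
have h : forall A, A \in M -> \sum_(B in Hg) f B A <= 3.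
  move=> A AM; have AHg := subsetP MHg A AM.
  have AH : A \in H := subsetP (Hg_sub H p) A AHg.
  apply: le_trans (@sum_sub_le _ _ Hg H (fun B => f B A) (Hg_sub H p) (fun B => f0 B A)) _.
  rewrite (bigD1 A) //= {1}/f.
  have A0 : A != set0 by apply/negP => /eqP e; move: Hne; rewrite -e AH.
  rewrite setIid A0.
  have -> : \sum_(i in H | i != A) f i A = wp A.
    rewrite /wp [RHS](eq_bigl (fun B => ((B \in H) && (B != A)) && (B :&: A != set0))); last first.
      by move=> B; rewrite andbA.
    by rewrite [RHS]big_mkcondr.
  have : wp A <= 2 by move: AHg; rewrite inE => /andP[].
  have := exprn_ile1 #|A| hp0 hp1.
  lra.
apply: le_trans (_ : _ <= \sum_(A in M) (3 : R)) _.
  by apply: ler_sum => A AM; exact: h A AM.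
by rewrite sumr_const mulr_natr.
Qed.

Local Notation Nn := (@Nn R T).
Local Notation ind := (@ind R T).

Lemma card_U (M : {set {set T}}) : is_matching M -> #|U M| = (\sum_(A in M) #|A|)%N.
Proof.
move=> hM; have : trivIset M.
  apply/trivIsetP => A B AM BM AB.
  by move/forallP: hM => /(_ A) /implyP /(_ AM) /forallP /(_ B) /implyP /(_ BM) /implyP /(_ AB).
by move/eqP => e; rewrite e.
Qed.

Lemma Nn_01 (l : seq {set T}) (W : {set T}) : 0 <= Nn l W <= 1.
Proof. exact: (prod_01 R l xpredT W). Qed.

Lemma pointwise (s : R) (W : {set T}) :
  (nat_of_bool ((matching_number (induced H W))%:R <= s))%:R <=
  \sum_(M in Ms s) ind (U M) W * Nn (enum (GM M)) W.
Proof.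
have t0 : forall M, 0 <= ind (U M) W * Nn (enum (GM M)) W.
  move=> M; apply: mulr_ge0; first exact: (@ind_ge0 R T (U M) W).
  by case/andP: (Nn_01 (enum (GM M)) W).
case: (boolP (_ <= s)) => hs /=; last by apply: sumr_ge0 => M _; apply: t0.
set G := induced Hg W.
pose P := [pred M : {set {set T}} | (M \subset G) && is_matching M].
have P0 : (0 < #|P|)%N.
  apply/card_gt0P; exists set0; rewrite inE /= sub0set /=.
  by apply/forallP => A; rewrite inE.
have [M0 PM0 eM0] := eq_bigmax_cond (fun M : {set {set T}} => #|M|) P0.
have nuG : matching_number G = #|M0|.
  by rewrite -eM0 /matching_number; apply: eq_bigl => M; rewrite inE.
rewrite inE /= in PM0; case/andP: PM0 => M0G M0m.
have GHg : G \subset Hg by apply/subsetP => A; rewrite inE => /andP[].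
have GH : G \subset induced H W.
  apply/subsetP => A; rewrite /G /induced !inE => /andP[/andP[AH _] AW].
  by rewrite AH AW.
have M0le : (#|M0| <= matching_number (induced H W))%N.
  rewrite /matching_number.
  apply: (@leq_bigmax_cond _ (fun M : {set {set T}} => (M \subset induced H W) && is_matching M)
     (fun M : {set {set T}} => #|M|) M0).
  by rewrite (subset_trans M0G GH) M0m.
have M0s : M0 \in Ms s.
  rewrite inE (subset_trans M0G GHg) M0m /=; apply: le_trans hs; by rewrite ler_nat.
rewrite (bigD1 M0) //=.
have i1 : ind (U M0) W = 1.
  rewrite /ind; have -> // : U M0 \subset W.
  apply/bigcupsP => A AM0; have := subsetP M0G A AM0; by rewrite inE => /andP[_ ->].
have n1 : Nn (enum (GM M0)) W = 1.
  rewrite /Nn big_enum /=; apply: big1 => c cG.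
  suff -> : ind c W = 0 by rewrite subr0.
  rewrite /ind; case: (boolP (c \subset W)) => // cW; exfalso.
  move: cG; rewrite inE => /andP[cHg cU].
  have cH : c \in H := subsetP (Hg_sub H p) c cHg.
  have dcU : [disjoint c & U M0] by rewrite -setI_eq0.
  have dc : forall D, D \in M0 -> [disjoint c & D].
    by move=> D DM; apply: disjointWr dcU; rewrite /U; exact: (bigcup_sup _ DM).
  have cM0 : c \notin M0.
    apply/negP => cM; have := dc c cM; rewrite -setI_eq0 setIid => /eqP e.
    by move: Hne; rewrite -e cH.
  have Pc : ((c |: M0) \subset G) && is_matching (c |: M0).
    apply/andP; split.
      apply/subsetP => A; rewrite in_setU1 => /orP[/eqP->|AM].
        by rewrite inE cHg cW.
      exact: (subsetP M0G A AM).
    apply/forallP => A; apply/implyP; rewrite in_setU1 => hA.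
    apply/forallP => B; apply/implyP; rewrite in_setU1 => hB; apply/implyP => AB.
    case/orP: hA => [/eqP eA|AM]; case/orP: hB => [/eqP eB|BM].
    - by rewrite eA eB eqxx in AB.
    - by rewrite eA; apply: dc.
    - by rewrite eB disjoint_sym; apply: dc.
    - by move/forallP: M0m => /(_ A) /implyP /(_ AM) /forallP /(_ B) /implyP /(_ BM) /implyP /(_ AB).
  have := @leq_bigmax_cond _ (fun M : {set {set T}} => (M \subset G) && is_matching M)
     (fun M : {set {set T}} => #|M|) _ Pc.
  rewrite -/(matching_number G) nuG cardsU1 cM0 add1n.
  by rewrite ltnn.
rewrite i1 n1 mulr1 lerDl; apply: sumr_ge0 => M _; exact: t0.
Qed.


Lemma main_bound (s a : R) : 0 <= a ->
  Pr_Vp p (fun W => (matching_number (induced H W))%:R <= s) <=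
  expR (- mu_p p Hg + Delta_p p H + a * s + expR (3 - a) * mu_p p Hg).
Proof.
move=> a0.
rewrite Pr_Ex.
apply: le_trans (Ex_le hp0 hp1 (enum T) set0 (pointwise s)) _.
rewrite Ex_sum.
set K := expR (- mu_p p Hg + Delta_p p H + a * s).
have K0 : 0 <= K := expR_ge0 _.
have hterm : forall M, M \in Ms s ->
    Ex p (enum T) (fun W => ind (U M) W * Nn (enum (GM M)) W) set0 <=
    K * \prod_(A in M) (expR (3 - a) * p ^+ #|A|).
  move=> M; rewrite inE => /and3P[MHg Mm hMs].
  have o1 : omono set0 (ind (U M)) by apply: omono_ind; rewrite -setI_eq0 set0I.
  apply: le_trans (harris_anti hp0 hp1 (enum T) set0 o1 (omono_negprod R (enum (GM M)) xpredT)) _.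
  rewrite E_ind.
  have hJ := janson hp0 hp1 (enum (GM M)).
  rewrite big_enum /= in hJ.
  have hJ2 := Jsum_le hp0 (GM_sub M).
  have hmu := mu_GM MHg.
  have hE : Ex p (enum T) (Nn (enum (GM M))) set0 <=
      expR (- mu_p p Hg + Delta_p p H + 3 * #|M|%:R).
    apply: le_trans hJ _; rewrite ler_expR; rewrite /mu_p in hmu *; lra.
  have hU : p ^+ #|U M| = \prod_(A in M) p ^+ #|A|.
    rewrite card_U //; exact: (big_morph _ (exprD p) (expr0 p)).
  have hexp : expR (- mu_p p Hg + Delta_p p H + 3 * #|M|%:R) <=
      K * \prod_(A in M) expR (3 - a).
    rewrite prodr_const -expRM_natl /K -expRD ler_expR.
    have : a * #|M|%:R <= a * s := ler_wpM2l a0 hMs.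
    lra.
  rewrite big_split /=.
  apply: le_trans (ler_wpM2l (exprn_ge0 _ hp0) hE) _.
  rewrite hU.
  have P0 : 0 <= \prod_(A in M) p ^+ #|A| by apply: prodr_ge0 => A _; exact: exprn_ge0.
  apply: le_trans (ler_wpM2l P0 hexp) _.
  set X := \prod_(A in M) p ^+ #|A|; set Y := \prod_(A in M) expR (3 - a).
  have -> : X * (K * Y) = K * (Y * X) by ring.
  by [].
apply: le_trans (ler_sum _ (fun M MS => hterm M MS)) _.
rewrite -mulr_sumr.
have g0 : forall M : {set {set T}}, 0 <= \prod_(A in M) (expR (3 - a) * p ^+ #|A|).
  by move=> M; apply: prodr_ge0 => A _; apply: mulr_ge0; [exact: expR_ge0|exact: exprn_ge0].
have hsum : \sum_(M in Ms s) \prod_(A in M) (expR (3 - a) * p ^+ #|A|) <=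
    expR (\sum_(A in Hg) expR (3 - a) * p ^+ #|A|).
  have MsP : Ms s \subset powerset Hg.
    by apply/subsetP => M; rewrite inE powersetE => /and3P[].
  apply: le_trans (@sum_sub_le _ _ (Ms s) (powerset Hg) _ MsP g0) _.
  rewrite (eq_bigl (fun M : {set {set T}} => M \subset Hg)); last by move=> M; rewrite powersetE.
  apply: sum_subset_prod => A; apply: mulr_ge0; [exact: expR_ge0|exact: exprn_ge0].
apply: le_trans (ler_wpM2l K0 hsum) _.
by rewrite /K -expRD -mulr_sumr.
Qed.

End Main2.

Unset Implicit Arguments.
Set Strict Implicit.

Theorem mainTheorem3 (R : realType) (T : finType) (H : {set {set T}}) (p gamma : R)
    (H_nonempty_edges : set0 \notin H)
    (hp0 : 0 <= p) (hp1 : p <= 1)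
    (hg0 : 0 < gamma) (hg1 : gamma <= 1 / 10) :
  Pr_Vp p (fun W => (matching_number (induced H W))%:R <= gamma ^+ 2 * mu_p p H)
  <= expR (- (1 - gamma) * mu_p p H + 2 * Delta_p p H).
Proof.
set mu := mu_p p H; set D := Delta_p p H.
set L := - ln gamma.
set a := 3 + 2 * L.
have g1 : gamma <= 1 by lra.
have L0 : 0 <= L by rewrite /L oppr_ge0; exact: ln_le0.
have a0 : 0 <= a by rewrite /a; lra.
have hb := @main_bound R T H p hp0 hp1 H_nonempty_edges (gamma ^+ 2 * mu) a a0.
have gpos : gamma \in Num.pos by rewrite posrE.
have e3 : expR (3 - a) = gamma ^+ 2.
  have -> : 3 - a = 2%:R * ln gamma by rewrite /a /L; ring.
  by rewrite expRM_natl lnK.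
have hmug := @bad_mass R T H p hp0 hp1.
rewrite -/mu -/D in hmug.
have D0 : 0 <= D.
  have := Ord_ge0 hp0 H; rewrite Ord_Delta; rewrite -/D; lra.
have mu0 : 0 <= mu by apply: sumr_ge0 => A _; exact: exprn_ge0.
have ln10 : ln (10 : R) <= 3.
  pose y := expR (1 / 2 : R).
  have y0 : 3 / 2 <= y by have := expR_ge1Dx (1 / 2 : R); rewrite -/y; lra.
  have e6 : expR (3 : R) = y ^+ 6.
    by rewrite /y -expRM_natl; congr expR; field.
  have y2 : 9 / 4 <= y ^+ 2 by rewrite expr2; nra.
  have y4 : 81 / 16 <= y ^+ 2 * y ^+ 2.
    have -> : (81 / 16 : R) = 9 / 4 * (9 / 4) by field.
    by apply: ler_pM => //; lra.
  have y6 : 729 / 64 <= y ^+ 2 * (y ^+ 2 * y ^+ 2).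
    have -> : (729 / 64 : R) = 9 / 4 * (81 / 16) by field.
    by apply: ler_pM => //; lra.
  have e66 : y ^+ 6 = y ^+ 2 * (y ^+ 2 * y ^+ 2) by rewrite -!exprD.
  have h10 : (10 : R) <= expR (3 : R) by rewrite e6 e66; lra.
  have -> : (3 : R) = ln (expR 3) by rewrite expRK.
  by rewrite ler_ln ?posrE ?expR_gt0.
have g10 : 0 < 10 * gamma by lra.
have hl1 : - ln (10 * gamma) <= (10 * gamma)^-1 - 1.
  have := expR_ge1Dx (ln ((10 * gamma)^-1)).
  rewrite lnK ?posrE ?invr_gt0 // lnV ?posrE //; lra.
have hl2 : ln (10 * gamma) = ln 10 + ln gamma by rewrite lnM ?posrE.
have hL : L <= (10 * gamma)^-1 + 2 by rewrite /L; lra.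
have hgL : gamma * L <= gamma * (10 * gamma)^-1 + 2 * gamma.
  have := ler_wpM2l (ltW hg0) hL; lra.
have e10 : gamma * (10 * gamma)^-1 = 1 / 10.
  by field; apply/negP => /eqP g; rewrite g ltxx in hg0.
have C : gamma * (1 + a) <= 1 by rewrite /a; lra.
have C2 : gamma ^+ 2 + a * gamma ^+ 2 <= gamma.
  have := ler_wpM2l (ltW hg0) C; rewrite expr2; lra.
apply: le_trans hb _; rewrite ler_expR e3.
set mug := mu_p p (Hg H p) in hmug *.
have g21 : gamma ^+ 2 <= 1 by rewrite expr2; nra.
have h1 : (1 - gamma ^+ 2) * (mu - D) <= (1 - gamma ^+ 2) * mug.
  by apply: ler_wpM2l; lra.
have h2 : (gamma ^+ 2 + a * gamma ^+ 2) * mu <= gamma * mu.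
  by apply: ler_wpM2r.
have h3 : 0 <= gamma ^+ 2 * D by rewrite mulr_ge0 // exprn_ge0 // ltW.
rewrite -/mu -/D -/mug.
lra.
Qed.
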